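(* Let $A,B\in\operatorname{Sym}(n,\mathbb{R})$ be linearly independent, form a non-dissipative pair, and satisfy $\operatorname{maxrank}\{A,B\}\ge3$. Then there exists $z\in\mathbb{R}^n$ with ${}^tzAz={}^tzBz=0$ such that $Az$ and $Bz$ are linearly independent (i.e. $\partial\Gamma_A$ and $\partial\Gamma_B$ intersect transversally at $z$).
   Context: $A,B$ form a non-dissipative pair if $0$ is the only positive semidefinite element of $\operatorname{span}_{\mathbb{R}}\{A,B\}$. $\operatorname{maxrank}\{A,B\}$ is the maximal rank of elements of $\operatorname{span}_{\mathbb{R}}\{A,B\}$. $\Gamma_M=\{z:{}^tzMz\le0\}$. *)

(* Defs.v *)
From mathcomp Require Import all_boot all_order all_algebra.
From mathcomp Require Import reals.
Set Implicit Arguments. Unset Strict Implicit. Unset Printing Implicit Defensive.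
Import Order.TTheory GRing.Theory Num.Theory.
Local Open Scope ring_scope.

Definition qform (R : realType) (n : nat) (M : 'M[R]_n) (z : 'cV[R]_n) : R :=
  (z^T *m M *m z) 0 0.

Definition symmetric_mx (R : realType) (n : nat) (M : 'M[R]_n) : Prop := M^T = M.

Definition psd (R : realType) (n : nat) (M : 'M[R]_n) : Prop :=
  symmetric_mx M /\ forall z : 'cV[R]_n, 0 <= qform M z.

Definition lin_indep2 (R : realType) (V : lmodType R) (u v : V) : Prop :=
  forall a b : R, a *: u + b *: v = 0 -> a = 0 /\ b = 0.

Definition non_dissipative (R : realType) (n : nat) (A B : 'M[R]_n) : Prop :=
  forall a b : R, psd (a *: A + b *: B) -> a *: A + b *: B = 0.

(* maxrank{A,B} : maximal rank of elements of span_R {A,B}, as a bound *)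
Definition maxrank_ge (R : realType) (n : nat) (A B : 'M[R]_n) (k : nat) : Prop :=
  exists a b : R, (k <= \rank (a *: A + b *: B))%N.

(* Main.v *)
Require Import Defs.
From mathcomp Require Import all_boot all_order all_algebra.
From mathcomp Require Import reals classical_sets.
From mathcomp Require Import ring lra.
From Stdlib Require Import Classical.
Import Order.TTheory GRing.Theory Num.Theory.
Local Open Scope ring_scope.
Set Implicit Arguments. Unset Strict Implicit. Unset Printing Implicit Defensive.


Definition bf (R : realType) (n : nat) (M : 'M[R]_n) (x y : 'cV[R]_n) : R :=
  (x^T *m M *m y) 0 0.
Definition ev (R : realType) (n : nat) (h x : 'cV[R]_n) : R := (h^T *m x) 0 0.

Lemma qbf (R : realType) n (M : 'M[R]_n) z : qform M z = bf M z z.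
Proof. by []. Qed.

Lemma bfDl (R : realType) n (M : 'M[R]_n) x y z : bf M (x + y) z = bf M x z + bf M y z.
Proof. by rewrite /bf raddfD /= !mulmxDl mxE. Qed.
Lemma bfDr (R : realType) n (M : 'M[R]_n) x y z : bf M z (x + y) = bf M z x + bf M z y.
Proof. by rewrite /bf !mulmxDr mxE. Qed.
Lemma bfZl (R : realType) n (M : 'M[R]_n) a x z : bf M (a *: x) z = a * bf M x z.
Proof. by rewrite /bf linearZ /= -!scalemxAl mxE. Qed.
Lemma bfZr (R : realType) n (M : 'M[R]_n) a x z : bf M z (a *: x) = a * bf M z x.
Proof. by rewrite /bf -!scalemxAr mxE. Qed.
Lemma bfMD (R : realType) n (M N : 'M[R]_n) x z : bf (M + N) x z = bf M x z + bf N x z.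
Proof. by rewrite /bf mulmxDr mulmxDl mxE. Qed.
Lemma bfMZ (R : realType) n (M : 'M[R]_n) a x z : bf (a *: M) x z = a * bf M x z.
Proof. by rewrite /bf -scalemxAr -scalemxAl mxE. Qed.
Lemma bfC (R : realType) n (M : 'M[R]_n) x y : M^T = M -> bf M x y = bf M y x.
Proof.
move=> sM; rewrite /bf -[in LHS](trmxK (x^T *m M *m y)) mxE.
by rewrite !trmx_mul trmxK sM mulmxA.
Qed.
Lemma bf_ev (R : realType) n (M : 'M[R]_n) x y : bf M x y = ev x (M *m y).
Proof. by rewrite /bf /ev mulmxA. Qed.
Lemma evC (R : realType) n (x y : 'cV[R]_n) : ev x y = ev y x.
Proof. by rewrite /ev -[in LHS](trmxK (x^T *m y)) mxE trmx_mul trmxK. Qed.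
Lemma evDr (R : realType) n (h x y : 'cV[R]_n) : ev h (x + y) = ev h x + ev h y.
Proof. by rewrite /ev mulmxDr mxE. Qed.
Lemma evZr (R : realType) n (h x : 'cV[R]_n) a : ev h (a *: x) = a * ev h x.
Proof. by rewrite /ev -scalemxAr mxE. Qed.
Lemma evDl (R : realType) n (h x y : 'cV[R]_n) : ev (x + y) h = ev x h + ev y h.
Proof. by rewrite evC evDr !(evC h). Qed.
Lemma evZl (R : realType) n (h x : 'cV[R]_n) a : ev (a *: x) h = a * ev x h.
Proof. by rewrite evC evZr evC. Qed.
Lemma ev0r (R : realType) n (h : 'cV[R]_n) : ev h 0 = 0.
Proof. by rewrite /ev mulmx0 mxE. Qed.

Lemma ev_gt0 (R : realType) n (h : 'cV[R]_n) : h != 0 -> 0 < ev h h.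
Proof.
move=> hn0.
have [i hi] : exists i, h i 0 != 0.
  case/boolP: [exists i, h i 0 != 0] => [/existsP//|/existsP Hn].
  move/negP: hn0; case; apply/eqP/matrixP => i j; rewrite (ord1 j) mxE.
  by apply/eqP/negPn/negP => H; case: Hn; exists i.
rewrite /ev mxE (bigD1 i) //= mxE ltr_pwDl //.
  by rewrite lt_def mulf_neq0 //= -expr2 sqr_ge0.
by apply: sumr_ge0 => k _; rewrite mxE -expr2 sqr_ge0.
Qed.


Lemma E2 (R : realType) n (M : 'M[R]_n) a b x y : M^T = M ->
  qform M (a *: x + b *: y) = a * a * qform M x + 2 * a * b * bf M x y + b * b * qform M y.
Proof.
move=> sM; rewrite !qbf bfDl !bfDr !bfZl !bfZr (bfC y x sM); ring.
Qed.

Lemma bf_ker (R : realType) n (M : 'M[R]_n) (x y : 'cV[R]_n) : M *m x = 0 -> bf M y x = 0.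
Proof. by move=> h; rewrite bf_ev h ev0r. Qed.

Lemma bf_kerS (R : realType) n (M : 'M[R]_n) (x y : 'cV[R]_n) : M^T = M -> M *m x = 0 -> bf M x y = 0.
Proof. by move=> sM h; rewrite bfC // bf_ker. Qed.

Lemma bfK (R : realType) n (M : 'M[R]_n) x y : M^T = M -> bf M x y = ev (M *m x) y.
Proof. by move=> sM; rewrite bfC // bf_ev evC. Qed.

Lemma quad_roots (R : realType) (p m r : R) : 0 < p -> r < 0 ->
  exists t1 t2, t1 < 0 /\ 0 < t2 /\ p + 2 * m * t1 + r * t1 * t1 = 0 /\
     p + 2 * m * t2 + r * t2 * t2 = 0 /\ r * t1 * t2 = p.
Proof.
move=> hp hr.
have hD : 0 <= m * m - p * r by nra.
set s := Num.sqrt (m * m - p * r).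
have hs : s * s = m * m - p * r by rewrite -expr2 sqr_sqrtr.
have s0 : 0 <= s by apply: sqrtr_ge0.
have hsm : m < s by nra.
have hsm' : - m < s by nra.
have rn0 : r != 0 by rewrite lt_eqF.
have e1 : r * ((s - m) / r) = s - m by rewrite mulrC divfK.
have e2 : r * ((- m - s) / r) = - m - s by rewrite mulrC divfK.
exists ((s - m) / r), ((- m - s) / r).
split; first by nra.
split; first by nra.
split.
  apply: (mulfI rn0); rewrite mulr0.
  transitivity (p * r + 2 * m * (r * ((s - m) / r)) + (r * ((s - m) / r)) * (r * ((s - m) / r))); first ring.
  rewrite e1; nra.
split.
  apply: (mulfI rn0); rewrite mulr0.
  transitivity (p * r + 2 * m * (r * ((- m - s) / r)) + (r * ((- m - s) / r)) * (r * ((- m - s) / r))); first ring.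
  rewrite e2; nra.
apply: (mulfI rn0).
transitivity ((r * ((s - m) / r)) * (r * ((- m - s) / r))); first ring.
rewrite e1 e2; nra.
Qed.

Local Open Scope classical_set_scope.

Lemma finsler_key (R : realType) n (A D : 'M[R]_n) (x y : 'cV[R]_n) :
  A^T = A -> D^T = D -> (forall z, qform A z = 0 -> 0 <= qform D z) ->
  0 < qform A x -> qform A y < 0 ->
  0 <= qform D x * (- qform A y) + qform D y * qform A x.
Proof.
move=> sA sD H hx hy.
have [t1 [t2 [t1n [t2p [r1 [r2 pr]]]]]] := quad_roots (bf A x y) hx hy.
have F t : qform A (1 *: x + t *: y) = 0 ->
    0 <= qform D x + 2 * t * bf D x y + t * t * qform D y.
  move=> /H; rewrite E2 //; congr (_ <= _); ring.
have G t : qform A x + 2 * bf A x y * t + qform A y * t * t = 0 ->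
    qform A (1 *: x + t *: y) = 0.
  by move=> h; rewrite E2 // -h; ring.
have F1 := F _ (G _ r1); have F2 := F _ (G _ r2).
set d1 := qform D x in F1 F2 *; set d2 := qform D y in F1 F2 *.
set e := bf D x y in F1 F2.
set p := qform A x in pr hx *; set r := qform A y in pr hy *.
have X : 0 <= (t2 - t1) * (d1 - d2 * t1 * t2).
  have -> : (t2 - t1) * (d1 - d2 * t1 * t2) =
     t2 * (d1 + 2 * t1 * e + t1 * t1 * d2) - t1 * (d1 + 2 * t2 * e + t2 * t2 * d2) by ring.
  nra.
have Y : 0 <= d1 - d2 * t1 * t2.
  have tp : 0 < t2 - t1 by lra.
  by rewrite pmulr_rge0 in X.
rewrite -pr.
have -> : d1 * - (r) + d2 * (r * t1 * t2) = (- r) * (d1 - d2 * t1 * t2) by ring.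
by apply: mulr_ge0 => //; lra.
Qed.

Lemma finsler (R : realType) n (A D : 'M[R]_n) (u v : 'cV[R]_n) :
  A^T = A -> D^T = D -> (forall z, qform A z = 0 -> 0 <= qform D z) ->
  0 < qform A u -> qform A v < 0 ->
  exists l : R, forall z, 0 <= qform D z + l * qform A z.
Proof.
move=> sA sD H hu hv.
pose E := [set r : R | exists x, 0 < qform A x /\ r = - qform D x / qform A x].
have ub : ubound E (- qform D v / qform A v).
  move=> r [x [hx ->]].
  have K := finsler_key sA sD H hx hv.
  rewrite ler_pdivrMr // mulrAC ler_ndivlMr //; lra.
have ne : E !=set0 by exists (- qform D u / qform A u); exists u.
exists (sup E) => z.
have [hz|hz|hz] := ltgtP (qform A z) 0.
- have : sup E <= - qform D z / qform A z.
    apply: ge_sup => // r [x [hx ->]].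
    have K := finsler_key sA sD H hx hz.
    rewrite ler_pdivrMr // mulrAC ler_ndivlMr //; lra.
  rewrite ler_ndivlMr // => h; lra.
- have : - qform D z / qform A z <= sup E.
    apply: sup_upper_bound; first by split => //; exists (- qform D v / qform A v).
    by exists z.
  rewrite ler_pdivrMr // => h; lra.
- by rewrite hz mulr0 addr0; apply: H.
Qed.

Local Close Scope classical_set_scope.


Lemma ker_bf (R : realType) n (M : 'M[R]_n) (x y : 'cV[R]_n) : M^T = M ->
  bf M x y != 0 -> M *m x != 0.
Proof. by move=> sM; apply: contra => /eqP h; rewrite (bf_kerS _ sM h). Qed.

Lemma T1 (R : realType) n (M : 'M[R]_n) (u v h : 'cV[R]_n) : M^T = M ->
  0 < qform M u -> qform M v < 0 -> h != 0 ->
  exists w, qform M w = 0 /\ M *m w != 0 /\ ev h w != 0.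
Proof.
move=> sM hu hv hn0.
have [t1 [_ [_ [_ [r1 _]]]]] := quad_roots (bf M u v) hu hv.
set w0 := 1 *: u + t1 *: v.
have q0 : qform M w0 = 0 by rewrite E2 // -r1; ring.
have g0 : M *m w0 != 0.
  apply/eqP => h0.
  have := bf_kerS u sM h0; have := bf_kerS v sM h0.
  rewrite /w0 !bfDl !bfZl -!qbf (bfC v u sM) => e1 e2; clear -e1 e2 hu hv; nra.
set g := M *m w0 in g0.
have [x [hx gx]] : exists x, ev h x != 0 /\ ev g x != 0.
  have hh := ev_gt0 hn0; have gg := ev_gt0 g0.
  case: (eqVneq (ev g h) 0) => e.
    exists (h + g); rewrite !evDr (evC h g) e add0r addr0.
    by split; apply/eqP => e'; move: hh gg; rewrite e'; rewrite ltxx.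
  by exists h; split => //; rewrite gt_eqF.
case: (eqVneq (ev h w0) 0) => ehw; last by exists w0.
set c := bf M w0 x.
have cE : c = ev g x by rewrite /c bfK.
have c0 : c != 0 by rewrite cE.
exists (qform M x *: w0 + (-2 * c) *: x).
split; first by rewrite E2 // q0 -/c; ring.
split.
  apply: (@ker_bf _ _ _ _ w0 sM).
  rewrite bfDl !bfZl -qbf q0 (bfC x w0 sM) -/c.
  have -> : qform M x * 0 + -2 * c * c = -2 * (c * c) by ring.
  by rewrite mulf_neq0 // ?mulf_neq0 // oppr_eq0 pnatr_eq0.
rewrite evDr !evZr ehw mulr0 add0r.
by rewrite !mulf_neq0 // oppr_eq0 pnatr_eq0.
Qed.

Lemma lemG (R : realType) n (M K : 'M[R]_n) (u v x : 'cV[R]_n) :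
  M^T = M -> K^T = K -> 0 < qform M u -> qform M v < 0 ->
  M *m x = 0 -> qform K x = 0 -> K *m x != 0 ->
  exists p y, qform M p = 0 /\ qform K p = 0 /\ bf M p y = 0 /\
     bf K p y != 0 /\ M *m p != 0.
Proof.
move=> sM sK hu hv Mx qKx Kx.
have [w [qMw [Mw hw]]] := T1 sM hu hv Kx.
set b := bf K x w.
have bE : b = ev (K *m x) w by rewrite /b bfK.
have b0 : b != 0 by rewrite bE.
have m2 : (-2 : R) != 0 by rewrite oppr_eq0 pnatr_eq0.
exists (qform K w *: x + (-2 * b) *: w), x.
split.
  rewrite E2 // qMw (qbf M x) !(bf_kerS _ sM Mx); ring.
split; first by rewrite E2 // qKx -/b; ring.
split; first by rewrite bf_ker.
split.
  rewrite bfDl !bfZl -qbf qKx (bfC w x sK) -/b.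
  have -> : qform K w * 0 + -2 * b * b = -2 * (b * b) by ring.
  by rewrite !mulf_neq0.
rewrite mulmxDr -!scalemxAr Mx scaler0 add0r scaler_eq0 negb_or Mw andbT.
by rewrite mulf_neq0.
Qed.


Lemma bf_delta (R : realType) n (M : 'M[R]_n) i j :
  bf M (delta_mx i 0) (delta_mx j 0) = M i j.
Proof. by rewrite /bf trmx_delta -rowE -colE !mxE. Qed.

Lemma bf_eq (R : realType) n (M N : 'M[R]_n) :
  (forall y z, bf M y z = bf N y z) -> M = N.
Proof. by move=> H; apply/matrixP => i j; rewrite -!bf_delta H. Qed.

Lemma bf_outer (R : realType) n (a b y z : 'cV[R]_n) :
  bf (a *m b^T) y z = ev y a * ev b z.
Proof.
rewrite /bf /ev.
have -> : y^T *m (a *m b^T) *m z = (y^T *m a) *m (b^T *m z) by rewrite !mulmxA.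
by rewrite mxE big_ord1.
Qed.

Lemma polar0 (R : realType) n (M : 'M[R]_n) (h : 'cV[R]_n) : M^T = M ->
  (forall y, ev h y = 0 -> qform M y = 0) ->
  forall a b, ev h a = 0 -> ev h b = 0 -> bf M a b = 0.
Proof.
move=> sM H a b ha hb.
have := H (1 *: a + 1 *: b); rewrite E2 // (H a ha) (H b hb).
rewrite evDr !evZr ha hb => /(_ ltac:(ring)) e.
have : 2 * bf M a b = 0 by rewrite -e; ring.
by move/eqP; rewrite mulf_eq0 pnatr_eq0 /= => /eqP.
Qed.

Lemma rank_outer (R : realType) n (a b : 'cV[R]_n) : (\rank (a *m b^T) <= 1)%N.
Proof. exact: mulmx_max_rank. Qed.

Lemma rankL (R : realType) n (M : 'M[R]_n) : M^T = M -> (3 <= \rank M)%N ->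
  forall x, exists y, bf M x y = 0 /\ qform M y != 0.
Proof.
move=> sM rk x.
case: (classic (exists y, bf M x y = 0 /\ qform M y != 0)) => // Hn.
have H : forall y, ev (M *m x) y = 0 -> qform M y = 0.
  move=> y e; apply/eqP/negPn/negP => q; apply: Hn; exists y.
  by rewrite bfK.
exfalso; move: rk; apply/negP; rewrite -ltnNge ltnS.
set h := M *m x in H.
case: (eqVneq h 0) => h0.
  have -> : M = 0.
    apply: bf_eq => y z; have -> : bf 0 y z = 0 by rewrite /bf mulmx0 mul0mx mxE.
    by apply: (polar0 sM H); rewrite h0 /ev trmx0 mul0mx mxE.
  by rewrite mxrank0.
set hh := ev h h.
have hh0 : hh != 0 by rewrite gt_eqF // ev_gt0.
set k := M *m h.
set c2 := qform M h / (hh * hh).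
set w := hh^-1 *: k - c2 *: h.
have -> : M = h *m w^T + (hh^-1 *: k) *m h^T.
  apply: bf_eq => y z.
  rewrite bfMD !bf_outer.
  pose pi (y : 'cV[R]_n) : 'cV[R]_n := y + (- (ev h y / hh)) *: h.
  have epi : forall y, ev h (pi y) = 0.
    by move=> y0; rewrite /pi evDr evZr -/hh; field.
  have dy : y = pi y + (ev h y / hh) *: h by rewrite /pi -addrA -scalerDl addNr scale0r addr0.
  have dz : z = pi z + (ev h z / hh) *: h by rewrite /pi -addrA -scalerDl addNr scale0r addr0.
  have [py [pz [P0 [Py [Pz [dy' dz']]]]]] : exists py pz, bf M py pz = 0 /\
     bf M py h = bf M y h - (ev h y / hh) * qform M h /\
     bf M h pz = bf M h z - (ev h z / hh) * qform M h /\
     y = py + (ev h y / hh) *: h /\ z = pz + (ev h z / hh) *: h.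
    exists (pi y), (pi z); split; first exact: polar0 sM H _ _ (epi y) (epi z).
    split; first by rewrite /pi bfDl bfZl -qbf; ring.
    split; first by rewrite /pi bfDr bfZr -qbf; ring.
    by [].
  have -> : bf M y z = bf M (py + (ev h y / hh) *: h) (pz + (ev h z / hh) *: h).
    by rewrite -dy' -dz'.
  rewrite bfDl !bfDr !bfZl !bfZr P0 Py Pz -qbf.
  rewrite (bf_ev M y h) -/k (bfK h z sM) -/k.
  rewrite /w evDl evZl -scaleNr evZl evZr (evC y h) /c2.
  by field.
apply: leq_trans (mxrank_add _ _) _.
by rewrite -[2%N]/(1 + 1)%N leq_add // rank_outer.
Qed.


Lemma sq_pos (R : realType) (b : R) : b != 0 -> 0 < b * b.
Proof. by move=> b0; rewrite lt_def mulf_neq0 //= -expr2 sqr_ge0. Qed.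

Lemma phi_path (R : realType) n (C D : 'M[R]_n) (x1 z y : 'cV[R]_n) :
  C^T = C -> D^T = D -> qform C x1 = 0 -> 0 < qform D x1 ->
  qform C z = 0 -> qform D z < 0 -> bf C x1 z != 0 ->
  bf C x1 y = 0 -> qform C y != 0 ->
  exists x, qform C x = 0 /\ qform D x = 0 /\ C *m x != 0.
Proof.
move=> sC sD qx1 dx1 qz dz b0 cy qy.
pose v (s : R) : 'cV[R]_n := (1 - s) *: z + s *: y.
pose phi (s : R) : 'cV[R]_n :=
  qform C (v s) *: x1 + (-2 * bf C x1 (v s)) *: v s.
have eqC s : qform C (v s) = 2 * (1 - s) * s * bf C z y + s * s * qform C y.
  by rewrite /v E2 // qz; ring.
have eb s : bf C x1 (v s) = (1 - s) * bf C x1 z.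
  by rewrite /v bfDr !bfZr cy; ring.
have edD s : bf D x1 (v s) = (1 - s) * bf D x1 z + s * bf D x1 y.
  by rewrite /v bfDr !bfZr.
have eqD s : qform D (v s) = (1 - s) * (1 - s) * qform D z + 2 * (1 - s) * s * bf D z y + s * s * qform D y.
  by rewrite /v E2.
pose T : {poly R} := (1 : R)%:P - 'X.
pose Pa := (2 * bf C z y)%:P * T * 'X + (qform C y)%:P * 'X * 'X.
pose Pb := (-2 * bf C x1 z)%:P * T.
pose Pc := (bf D x1 z)%:P * T + (bf D x1 y)%:P * 'X.
pose Pd := (qform D z)%:P * T * T + (2 * bf D z y)%:P * T * 'X + (qform D y)%:P * 'X * 'X.
pose G := Pa * Pa * (qform D x1)%:P + 2%:P * Pa * Pb * Pc + Pb * Pb * Pd.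
have hG s : G.[s] = qform D (phi s).
  rewrite /phi E2 // eqC eb edD eqD /G /Pa /Pb /Pc /Pd /T !(hornerD, hornerM, hornerC, hornerX, hornerN).
  ring.
have G0 : G.[0] <= 0.
  have -> : G.[0] = 4 * (bf C x1 z * bf C x1 z) * qform D z by rewrite /G /Pa /Pb /Pc /Pd /T !(hornerD, hornerM, hornerC, hornerX, hornerN); ring.
  have := sq_pos b0; nra.
have G1s : 0 < G.[1].
  have -> : G.[1] = qform C y * qform C y * qform D x1 by rewrite /G /Pa /Pb /Pc /Pd /T !(hornerD, hornerM, hornerC, hornerX, hornerN); ring.
  have := sq_pos qy; nra.
have G1 := ltW G1s.
have [s /andP[s0 s1] rs] : exists2 s, 0 <= s <= 1 & root G s.
  by apply: poly_ivt; rewrite ?ler01 ?G0 ?G1.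
have sn1 : s != 1 by apply: contraTneq rs => ->; rewrite rootE gt_eqF.
exists (phi s); split.
  by rewrite /phi E2 // qx1; ring.
split; first by rewrite -hG; apply/eqP.
apply: (@ker_bf _ _ _ _ x1 sC).
rewrite /phi bfDl !bfZl -qbf qx1 (bfC (v s) x1 sC) eb.
have -> : qform C (v s) * 0 + -2 * ((1 - s) * bf C x1 z) * ((1 - s) * bf C x1 z)
   = -2 * (((1 - s) * bf C x1 z) * ((1 - s) * bf C x1 z)) by ring.
rewrite mulf_neq0 ?oppr_eq0 ?pnatr_eq0 // gt_eqF // sq_pos // mulf_neq0 //.
by rewrite subr_eq0 eq_sym.
Qed.


Lemma line_case (R : realType) n (C D : 'M[R]_n) (x1 z : 'cV[R]_n) :
  C^T = C -> D^T = D -> qform C x1 = 0 -> 0 < qform D x1 ->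
  qform C z = 0 -> qform D z < 0 -> bf C x1 z = 0 ->
  exists x, qform C x = 0 /\ qform D x = 0 /\ (C *m x != 0 \/ D *m x != 0).
Proof.
move=> sC sD qx1 dx1 qz dz cz.
have [t1 [t2 [t1n [t2p [r1 [r2 _]]]]]] := quad_roots (bf D x1 z) dx1 dz.
have qCt t : qform C (1 *: x1 + t *: z) = 0 by rewrite E2 // qx1 qz cz; ring.
have qDt t : qform D x1 + 2 * bf D x1 z * t + qform D z * t * t = 0 ->
   qform D (1 *: x1 + t *: z) = 0 by move=> h; rewrite E2 // -h; ring.
case: (eqVneq (D *m (1 *: x1 + t1 *: z)) 0) => h1; last first.
  by exists (1 *: x1 + t1 *: z); split; [|split; [apply: qDt|right]].
exists (1 *: x1 + t2 *: z); split => //; split; first exact: qDt.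
right; apply/eqP => h2.
have E : (t2 - t1) *: (D *m z) = 0.
  have -> : (t2 - t1) *: (D *m z) =
     D *m (1 *: x1 + t2 *: z) - D *m (1 *: x1 + t1 *: z).
    rewrite !mulmxDr -!scalemxAr scalerBl opprD addrACA subrr add0r.
    by [].
  by rewrite h1 h2 subrr.
move/eqP: E; rewrite scaler_eq0 subr_eq0 => /orP[/eqP e|/eqP Dz].
  by move: t1n; rewrite -e ltNge (ltW t2p).
by move: dz; rewrite qbf (bf_kerS _ sD Dz) ltxx.
Qed.


Definition ND (R : realType) n (A B : 'M[R]_n) := forall a b : R,
  (forall z, 0 <= a * qform A z + b * qform B z) -> a = 0 /\ b = 0.

Lemma nd_neg (R : realType) n (A B : 'M[R]_n) a b : ND A B -> ~ (a = 0 /\ b = 0) ->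
  exists z, a * qform A z + b * qform B z < 0.
Proof.
move=> H ab; case: (classic (exists z, a * qform A z + b * qform B z < 0)) => // Hn.
exfalso; apply: ab; apply: H => z; rewrite leNgt; apply/negP => h; apply: Hn; by exists z.
Qed.

Lemma qformN (R : realType) n (M : 'M[R]_n) z : qform (- M) z = - qform M z.
Proof. by rewrite /qform mulmxN mulNmx mxE. Qed.

Lemma qformLC (R : realType) n (C D : 'M[R]_n) a b z :
  qform (a *: C + b *: D) z = a * qform C z + b * qform D z.
Proof. by rewrite !qbf bfMD !bfMZ. Qed.

Lemma symLC (R : realType) n (C D : 'M[R]_n) a b : C^T = C -> D^T = D ->
  (a *: C + b *: D)^T = a *: C + b *: D.
Proof. by move=> sC sD; rewrite raddfD /= !linearZ /= sC sD. Qed.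

Lemma mulLC (R : realType) n (C D : 'M[R]_n) a b (p : 'cV[R]_n) :
  (a *: C + b *: D) *m p = a *: (C *m p) + b *: (D *m p).
Proof. by rewrite mulmxDl -!scalemxAl. Qed.

Lemma sc2 (R : realType) (a b x y : R) : ~ (a = 0 /\ b = 0) ->
  a * x + b * y = 0 -> - b * x + a * y = 0 -> x = 0 /\ y = 0.
Proof.
move=> ab e1 e2.
have s0 : 0 < a * a + b * b.
  case: (eqVneq a 0) => [a0|a0].
    case: (eqVneq b 0) => [b0|b0]; first by exfalso; apply: ab.
    by have := sq_pos b0; nra.
  by have := sq_pos a0; nra.
have ex : (a * a + b * b) * x = 0 by rewrite -[RHS](_ : a * (a * x + b * y) - b * (- b * x + a * y) = 0); [ring | rewrite e1 e2; ring].
have ey : (a * a + b * b) * y = 0 by rewrite -[RHS](_ : b * (a * x + b * y) + a * (- b * x + a * y) = 0); [ring | rewrite e1 e2; ring].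
move/eqP: ex; move/eqP: ey; rewrite !mulf_eq0 (gt_eqF s0) /= => /eqP -> /eqP ->.
by [].
Qed.

Lemma indep_wit (R : realType) n (M K : 'M[R]_n) (p y : 'cV[R]_n) :
  M^T = M -> K^T = K -> bf M p y = 0 -> bf K p y != 0 -> M *m p != 0 ->
  lin_indep2 (M *m p) (K *m p).
Proof.
move=> sM sK m0 k0 Mp a b e.
have : ev y (a *: (M *m p) + b *: (K *m p)) = 0 by rewrite e ev0r.
rewrite evDr !evZr -!bf_ev (bfC y p sM) (bfC y p sK) m0 mulr0 add0r => /eqP.
rewrite mulf_eq0 (negPf k0) orbF => /eqP b0; subst b.
move: e; rewrite scale0r addr0 => /eqP; rewrite scaler_eq0 (negPf Mp) orbF.
by move/eqP.
Qed.

Lemma indep_rot (R : realType) n (u v : 'cV[R]_n) a b : ~ (a = 0 /\ b = 0) ->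
  lin_indep2 (a *: u + b *: v) (- b *: u + a *: v) -> lin_indep2 u v.
Proof.
move=> ab H g d e.
have s0 : a * a + b * b != 0.
  apply/eqP => s; apply: ab.
  case: (eqVneq a 0) => [a0|a0].
    case: (eqVneq b 0) => [b0|b0]; first by [].
    by have := sq_pos b0; nra.
  by have := sq_pos a0; nra.
set g' := (a * g + b * d) / (a * a + b * b).
set d' := (a * d - b * g) / (a * a + b * b).
have [h1 h2] : g' = 0 /\ d' = 0.
  apply: H; rewrite -[RHS]e; apply/matrixP => i j; rewrite !mxE /g' /d'.
  by field.
have hg : g = a * g' - b * d' by rewrite /g' /d'; field.
have hd : d = b * g' + a * d' by rewrite /g' /d'; field.
by rewrite hg hd h1 h2; split; ring.
Qed.

Lemma pullback (R : realType) n (C D : 'M[R]_n) a b (p : 'cV[R]_n) :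
  ~ (a = 0 /\ b = 0) ->
  qform (a *: C + b *: D) p = 0 -> qform (- b *: C + a *: D) p = 0 ->
  lin_indep2 ((a *: C + b *: D) *m p) ((- b *: C + a *: D) *m p) ->
  qform C p = 0 /\ qform D p = 0 /\ lin_indep2 (C *m p) (D *m p).
Proof.
move=> ab; rewrite !qformLC !mulLC => e1 e2 ind.
have [h1 h2] := sc2 ab e1 e2.
split; first exact: h1.
split; first exact: h2.
exact: indep_rot ab ind.
Qed.

Lemma nd_rot (R : realType) n (C D : 'M[R]_n) a b : ~ (a = 0 /\ b = 0) ->
  ND C D -> ND (a *: C + b *: D) (- b *: C + a *: D).
Proof.
move=> ab H x y hz.
have [e1 e2] : x * a - y * b = 0 /\ x * b + y * a = 0.
  apply: H => z; have := hz z; rewrite !qformLC.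
  congr (_ <= _); ring.
have f1 : a * x + b * (- y) = 0 by rewrite -e1; ring.
have f2 : - b * x + a * (- y) = 0 by rewrite -oppr0 -e2; ring.
have [-> hy] := sc2 ab f1 f2; split => //.
by rewrite -[y]opprK hy oppr0.
Qed.


Lemma sc2v (R : realType) n (u v : 'cV[R]_n) a b : ~ (a = 0 /\ b = 0) ->
  a *: u + b *: v = 0 -> - b *: u + a *: v = 0 -> u = 0 /\ v = 0.
Proof.
move=> ab e1 e2.
have H i j : u i j = 0 /\ v i j = 0.
  have f1 : a * u i j + b * v i j = 0.
    by have := congr1 (fun m : 'cV[R]_n => m i j) e1; rewrite !mxE.
  have f2 : - b * u i j + a * v i j = 0.
    by have := congr1 (fun m : 'cV[R]_n => m i j) e2; rewrite !mxE.
  exact: sc2 ab f1 f2.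
by split; apply/matrixP => i j; rewrite mxE; case: (H i j).
Qed.

Lemma final (R : realType) n (C D : 'M[R]_n) (x : 'cV[R]_n) :
  C^T = C -> D^T = D -> ND C D -> qform C x = 0 -> qform D x = 0 ->
  (C *m x != 0 \/ D *m x != 0) ->
  exists p, qform C p = 0 /\ qform D p = 0 /\ lin_indep2 (C *m p) (D *m p).
Proof.
move=> sC sD nd qCx qDx nz.
case: (classic (lin_indep2 (C *m x) (D *m x))) => [ind|nind]; first by exists x.
have [a [b [e ab]]] : exists a b, a *: (C *m x) + b *: (D *m x) = 0 /\ ~ (a = 0 /\ b = 0).
  apply: NNPP => H; apply: nind => a b e; apply: NNPP => h; apply: H; by exists a, b.
have sM := symLC a b sC sD; have sK := symLC (- b) a sC sD.
have Mx : (a *: C + b *: D) *m x = 0 by rewrite mulLC.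
have qKx : qform (- b *: C + a *: D) x = 0 by rewrite qformLC qCx qDx; ring.
have Kx : (- b *: C + a *: D) *m x != 0.
  apply/eqP; rewrite mulLC => Kx0.
  have [c0 d0] := sc2v ab e Kx0.
  by case: nz; rewrite ?c0 ?d0 eqxx.
have ab' : ~ (- a = 0 /\ - b = 0).
  by move=> [h1 h2]; apply: ab; split; [rewrite -[a]opprK h1 | rewrite -[b]opprK h2]; rewrite oppr0.
have [u hu] := nd_neg nd ab'.
have [v hv] := nd_neg nd ab.
have hu' : 0 < qform (a *: C + b *: D) u by rewrite qformLC; lra.
have hv' : qform (a *: C + b *: D) v < 0 by rewrite qformLC.
have [p [y [q1 [q2 [m0 [k0 Mp]]]]]] := lemG sM sK hu' hv' Mx qKx Kx.
exists p; apply: pullback ab q1 q2 _.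
exact: indep_wit sM sK m0 k0 Mp.
Qed.

Lemma core (R : realType) n (C D : 'M[R]_n) :
  C^T = C -> D^T = D -> ND C D -> (3 <= \rank C)%N ->
  exists p, qform C p = 0 /\ qform D p = 0 /\ lin_indep2 (C *m p) (D *m p).
Proof.
move=> sC sD nd rk.
have n10 : ~ ((1 : R) = 0 /\ (0 : R) = 0) by case=> /eqP; rewrite oner_eq0.
have nm10 : ~ ((-1 : R) = 0 /\ (0 : R) = 0) by case=> /eqP; rewrite oppr_eq0 oner_eq0.
have [v0 hv0] := nd_neg nd n10.
have [u0 hu0] := nd_neg nd nm10.
have hu : 0 < qform C u0 by lra.
have hv : qform C v0 < 0 by lra.
have sND : (- D)^T = - D by rewrite linearN /= sD.
have [x1 [cx1 dx1]] : exists x1, qform C x1 = 0 /\ 0 < qform D x1.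
  apply: NNPP => Hn.
  have H z : qform C z = 0 -> 0 <= qform (- D) z.
    move=> cz; rewrite qformN oppr_ge0 leNgt; apply/negP => dz; apply: Hn; by exists z.
  have [l hl] := finsler sC sND H hu hv.
  have hz z : 0 <= l * qform C z + -1 * qform D z by have := hl z; rewrite qformN; lra.
  have [_ h] := nd l (-1) hz.
  by move/eqP: h; rewrite oppr_eq0 oner_eq0.
have [z [cz dz]] : exists z, qform C z = 0 /\ qform D z < 0.
  apply: NNPP => Hn.
  have H w : qform C w = 0 -> 0 <= qform D w.
    move=> cw; rewrite leNgt; apply/negP => dw; apply: Hn; by exists w.
  have [l hl] := finsler sC sD H hu hv.
  have hw w : 0 <= l * qform C w + 1 * qform D w by have := hl w; lra.
  have [_ h] := nd l 1 hw.
  by move/eqP: h; rewrite oner_eq0.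
have [x [qx [dx nz]]] : exists x, qform C x = 0 /\ qform D x = 0 /\ (C *m x != 0 \/ D *m x != 0).
  case: (eqVneq (bf C x1 z) 0) => bz.
    exact: line_case sC sD cx1 dx1 cz dz bz.
  have [y [hy1 hy2]] := rankL sC rk x1.
  have [x [q1 [q2 q3]]] := phi_path sC sD cx1 dx1 cz dz bz hy1 hy2.
  by exists x; split => //; split => //; left.
exact: final sC sD nd qx dx nz.
Qed.


Lemma sub_hg (R : realType) n (X : 'M[R]_n) (h g : 'cV[R]_n) :
  (forall w, ev h w = 0 -> ev g w = 0 -> X *m w = 0) ->
  (X <= col_mx h^T g^T)%MS.
Proof.
move=> H; rewrite submxE; apply/eqP/matrixP => i j.
set K := cokermx (col_mx h^T g^T).
have hK : col_mx (h^T *m K) (g^T *m K) = 0 by rewrite -mul_col_mx mulmx_coker.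
have /eqP := hK; rewrite col_mx_eq0 => /andP[/eqP hK1 /eqP hK2].
have cE m (Y : 'M[R]_(m, n)) : Y *m col j K = col j (Y *m K) by rewrite !colE mulmxA.
have Xw : X *m col j K = 0.
  apply: H; rewrite /ev cE ?hK1 ?hK2 !mxE //.
have := congr1 (fun m : 'cV[R]_n => m i 0) Xw.
by rewrite cE !mxE.
Qed.

Lemma ms_rank (R : realType) n (A B : 'M[R]_n) (h g : 'cV[R]_n) a b :
  (forall w, ev h w = 0 -> ev g w = 0 -> A *m w = 0 /\ B *m w = 0) ->
  (\rank (a *: A + b *: B) <= 2)%N.
Proof.
move=> H.
apply: leq_trans (mxrankS _) (rank_leq_row _).
rewrite addsmx_sub !scalemx_sub //; apply: sub_hg => w h1 h2; by case: (H w h1 h2).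
Qed.


Lemma decomp (R : realType) n (M : 'M[R]_n) (x : 'cV[R]_n) : M^T = M ->
  M *m x != 0 -> (forall y, ev (M *m x) y = 0 -> qform M y = 0) ->
  exists g, forall y z, bf M y z = ev (M *m x) y * ev g z + ev g y * ev (M *m x) z.
Proof.
move=> sM h0 H.
set h := M *m x in h0 H *.
set hh := ev h h.
have hh0 : hh != 0 by rewrite gt_eqF // ev_gt0.
set k := M *m h.
set c2 := qform M h / (hh * hh).
exists (hh^-1 *: k - (c2 / 2) *: h) => y z.
pose pi (y : 'cV[R]_n) : 'cV[R]_n := y + (- (ev h y / hh)) *: h.
have epi : forall y, ev h (pi y) = 0.
  by move=> y0; rewrite /pi evDr evZr -/hh; field.
have [py [pz [P0 [Py [Pz [dy' dz']]]]]] : exists py pz, bf M py pz = 0 /\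
   bf M py h = bf M y h - (ev h y / hh) * qform M h /\
   bf M h pz = bf M h z - (ev h z / hh) * qform M h /\
   y = py + (ev h y / hh) *: h /\ z = pz + (ev h z / hh) *: h.
  exists (pi y), (pi z); split; first exact: polar0 sM H _ _ (epi y) (epi z).
  split; first by rewrite /pi bfDl bfZl -qbf; ring.
  split; first by rewrite /pi bfDr bfZr -qbf; ring.
  by split; rewrite /pi -addrA -scalerDl addNr scale0r addr0.
have -> : bf M y z = bf M (py + (ev h y / hh) *: h) (pz + (ev h z / hh) *: h).
  by rewrite -dy' -dz'.
rewrite bfDl !bfDr !bfZl !bfZr P0 Py Pz -qbf.
rewrite (bf_ev M y h) -/k (bfK h z sM) -/k.
rewrite !evDl !evZl -!scaleNr !evZl (evC k y) (evC k z) (evC h y) (evC h z) /c2.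
field; exact: hh0.
Qed.

Lemma psd_zero (R : realType) n (D : 'M[R]_n) (h w0 e : 'cV[R]_n) : D^T = D ->
  (forall w, ev h w = 0 -> 0 <= qform D w) -> ev h w0 = 0 -> qform D w0 = 0 ->
  ev h e = 0 -> bf D w0 e = 0.
Proof.
move=> sD H hw q0 he.
set d := bf D w0 e; set q := qform D e.
have q0' : 0 <= q by apply: H.
set u := 1 + q.
have u0 : 0 < u by rewrite /u; lra.
set t := - d / u.
have tu : t * u = - d by rewrite /t divfK // gt_eqF.
have := H (1 *: w0 + t *: e).
rewrite evDr !evZr hw he !mulr0 addr0 => /(_ erefl).
rewrite E2 // q0 -/d -/q => h1.
have h2 : 0 <= 2 * (t * u) * d * u + (t * u) * (t * u) * q.
  have -> : 2 * (t * u) * d * u + (t * u) * (t * u) * q =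
    (u * u) * (1 * 1 * 0 + 2 * 1 * t * d + t * t * q) by ring.
  by apply: mulr_ge0 => //; nra.
rewrite tu in h2.
have : d * d * (u + 1) <= 0 by rewrite /u in h2 *; nra.
move=> h3; have : d * d <= 0 by nra.
by move=> h4; have : d = 0 by nra.
Qed.


Lemma bfN (R : realType) n (M : 'M[R]_n) x y : bf (- M) x y = - bf M x y.
Proof. by rewrite /bf mulmxN mulNmx mxE. Qed.

Lemma kerP (R : realType) n (M : 'M[R]_n) (w : 'cV[R]_n) : M^T = M ->
  (forall v, bf M w v = 0) -> M *m w = 0.
Proof.
move=> sM H; apply/eqP; apply: contraT => Mw.
by have := ev_gt0 Mw; rewrite -bfK // H ltxx.
Qed.

Lemma step2 (R : realType) n (C D : 'M[R]_n) (x1 z : 'cV[R]_n) :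
  C^T = C -> D^T = D ->
  (forall h g : 'cV[R]_n, exists w, ev h w = 0 /\ ev g w = 0 /\ (C *m w != 0 \/ D *m w != 0)) ->
  qform C x1 = 0 -> 0 < qform D x1 ->
  qform C z = 0 -> qform D z < 0 -> bf C x1 z != 0 ->
  exists x, qform C x = 0 /\ qform D x = 0 /\ (C *m x != 0 \/ D *m x != 0).
Proof.
move=> sC sD PK cx1 dx1 cz dz bz.
case: (classic (exists y, bf C x1 y = 0 /\ qform C y != 0)) => [[y [hy1 hy2]]|Hn].
  have [x [q1 [q2 q3]]] := phi_path sC sD cx1 dx1 cz dz bz hy1 hy2.
  by exists x; split => //; split => //; left.
have h0 : C *m x1 != 0 := ker_bf sC bz.
have H : forall y, ev (C *m x1) y = 0 -> qform C y = 0.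
  move=> y e; apply/eqP/negPn/negP => q; apply: Hn; exists y.
  by rewrite bfK.
have [g Hg] := decomp sC h0 H.
set h := C *m x1 in h0 H Hg.
have qCv v : qform C v = 2 * (ev h v * ev g v).
  by rewrite qbf Hg (evC g v) (evC h v); ring.
have hz : ev h z != 0 by rewrite /h -bfK.
have gz : ev g z = 0.
  by move/eqP: cz; rewrite qCv !mulf_eq0 pnatr_eq0 (negPf hz) /= => /eqP.
case: (classic (exists w, ev h w = 0 /\ qform D w < 0)) => [[w [hw dw]]|HA].
  apply: (line_case sC sD cx1 dx1 _ dw); first by rewrite qCv hw; ring.
  by rewrite bfK.
case: (classic (exists w, ev g w = 0 /\ 0 < qform D w)) => [[w [gw dw]]|HB].
  apply: (line_case sC sD _ dw cz dz); first by rewrite qCv gw; ring.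
  by rewrite Hg gw gz; ring.
have HA' w : ev h w = 0 -> 0 <= qform D w.
  by move=> hw; rewrite leNgt; apply/negP => dw; apply: HA; exists w.
have HB' w : ev g w = 0 -> 0 <= qform (- D) w.
  by move=> gw; rewrite qformN oppr_ge0 leNgt; apply/negP => dw; apply: HB; exists w.
have [w0 [a1 [a2 nz]]] := PK h g.
have q0 : qform D w0 = 0.
  by have := HA' _ a1; have := HB' _ a2; rewrite qformN; lra.
have sND : (- D)^T = - D by rewrite linearN /= sD.
have Cw0 : C *m w0 = 0 by apply: kerP => // v; rewrite Hg a1 a2; ring.
have Dw0 : D *m w0 = 0.
  apply: kerP => // v.
  set t := ev h v / ev h z.
  set e := v + (- t) *: z.
  have he : ev h e = 0 by rewrite /e evDr evZr /t; field.
  have -> : v = e + t *: z by rewrite /e -addrA -scalerDl addNr scale0r addr0.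
  rewrite bfDr bfZr (psd_zero sD HA' a1 q0 he).
  have : bf (- D) w0 z = 0 by apply: (psd_zero sND HB' a2) => //; rewrite qformN q0 oppr0.
  by rewrite bfN => /eqP; rewrite oppr_eq0 => /eqP ->; ring.
by case: nz; rewrite ?Cw0 ?Dw0 eqxx.
Qed.


Lemma core2 (R : realType) n (C D : 'M[R]_n) :
  C^T = C -> D^T = D -> ND C D ->
  (forall h g : 'cV[R]_n, exists w, ev h w = 0 /\ ev g w = 0 /\ (C *m w != 0 \/ D *m w != 0)) ->
  exists p, qform C p = 0 /\ qform D p = 0 /\ lin_indep2 (C *m p) (D *m p).
Proof.
move=> sC sD nd PK.
have n10 : ~ ((1 : R) = 0 /\ (0 : R) = 0) by case=> /eqP; rewrite oner_eq0.
have nm10 : ~ ((-1 : R) = 0 /\ (0 : R) = 0) by case=> /eqP; rewrite oppr_eq0 oner_eq0.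
have [v0 hv0] := nd_neg nd n10.
have [u0 hu0] := nd_neg nd nm10.
have hu : 0 < qform C u0 by lra.
have hv : qform C v0 < 0 by lra.
have sND : (- D)^T = - D by rewrite linearN /= sD.
have [x1 [cx1 dx1]] : exists x1, qform C x1 = 0 /\ 0 < qform D x1.
  apply: NNPP => Hn.
  have H z : qform C z = 0 -> 0 <= qform (- D) z.
    move=> cz; rewrite qformN oppr_ge0 leNgt; apply/negP => dz; apply: Hn; by exists z.
  have [l hl] := finsler sC sND H hu hv.
  have hz z : 0 <= l * qform C z + -1 * qform D z by have := hl z; rewrite qformN; lra.
  have [_ h] := nd l (-1) hz.
  by move/eqP: h; rewrite oppr_eq0 oner_eq0.
have [z [cz dz]] : exists z, qform C z = 0 /\ qform D z < 0.
  apply: NNPP => Hn.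
  have H w : qform C w = 0 -> 0 <= qform D w.
    move=> cw; rewrite leNgt; apply/negP => dw; apply: Hn; by exists w.
  have [l hl] := finsler sC sD H hu hv.
  have hw w : 0 <= l * qform C w + 1 * qform D w by have := hl w; lra.
  have [_ h] := nd l 1 hw.
  by move/eqP: h; rewrite oner_eq0.
have [x [qx [dx nz]]] : exists x, qform C x = 0 /\ qform D x = 0 /\ (C *m x != 0 \/ D *m x != 0).
  case: (eqVneq (bf C x1 z) 0) => bz.
    exact: line_case sC sD cx1 dx1 cz dz bz.
  exact: step2 sC sD PK cx1 dx1 cz dz bz.
exact: final sC sD nd qx dx nz.
Qed.

Unset Implicit Arguments.
Theorem theorem2p9 (R : realType) (n : nat) (A B : 'M[R]_n) :
  symmetric_mx A -> symmetric_mx B ->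
  lin_indep2 A B ->
  non_dissipative A B ->
  maxrank_ge A B 3 ->
  exists z : 'cV[R]_n,
    qform A z = 0 /\ qform B z = 0 /\ lin_indep2 (A *m z) (B *m z).
Proof.
move=> sA sB ind nd [a [b rk]].
have ndAB : ND A B.
  move=> x y hz; apply: ind; apply: nd; split; first exact: symLC.
  by move=> z; rewrite qformLC.
apply: core2 => // h g.
apply: NNPP => Hn.
have H w : ev h w = 0 -> ev g w = 0 -> A *m w = 0 /\ B *m w = 0.
  move=> e1 e2; split; apply/eqP/negPn/negP => nz; apply: Hn; exists w.
    by split => //; split => //; left.
  by split => //; split => //; right.
by have := ms_rank a b H; rewrite leqNgt rk.
Qed.
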